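(* Consider the Waterfilling Mechanism (with exact bucketing) described in the context. Let $S$ be any nonempty finite set of analysts and let $j \notin S$ be a further analyst, each analyst $l$ having a workload $W_l \in \mathbb{R}^{m_l\times n}$, a weight $s_l>0$ and a selected strategy matrix $A_l$ satisfying $W_l = W_l A_l^+ A_l$ and having every column of $A_l$ of $L_1$ norm $1$. Then for every analyst $i \in S$, $$\mathrm{Err}_i\big(S\cup\{j\}\big) \le \mathrm{Err}_i(S),$$ i.e. adding an analyst to the collective cannot increase the expected error of any analyst.
   Context: Data are a vector $x\in\mathbb{R}^n$. Fix $\varepsilon>0$. Each analyst $l$ has a workload matrix $W_l$ (a set of linear queries), a weight $s_l>0$ (analyst $l$ is entitled to privacy budget $s_l\varepsilon$), and a strategy matrix $A_l$ produced for $W_l$ alone by a selection step (it depends only on $W_l$), satisfying $W_l = W_lA_l^+A_l$ (where $^+$ denotes the Moore–Penrose pseudo-inverse) and every column of $A_l$ having $L_1$ norm $1$. Fix a norm $\|\cdot\|$ on row vectors. Waterfilling Mechanism for a collective $S$ of analysts: maintain a set $B$ of buckets, each a unit vector $e$ with a weight $f_B(e)>0$, initially empty. For each $l\in S$ and each nonzero row $v$ of $s_lA_l$, let $e=v/\|v\|$; if $e\in B$, increase $f_B(e)$ by $\|v\|$, otherwise add $e$ to $B$ with $f_B(e)=\|v\|$. The joint strategy $A$ has one row $f_B(e)\,e$ for each $e\in B$. With total budget $\varepsilon_S=\big(\sum_{l\in S}s_l\big)\varepsilon$, the mechanism releases $y=Ax+\eta$ where $\eta$ has i.i.d. Laplace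 entries of scale $\|A\|_1/\varepsilon_S$, with $\|A\|_1$ the maximum $L_1$ norm of a column of $A$ (the $L_1$ sensitivity). Analyst $i$ estimates $W_ix$ by $W_iA^+y$. The expected error of analyst $i$ in collective $S$ is $\mathrm{Err}_i(S)=\mathbb{E}\|W_ix-W_iA^+y\|_2^2 = \frac{2\|A\|_1^2}{\varepsilon_S^2}\|W_iA^+\|_F^2$. *)

(* Defs.v *)
From HB Require Import structures.
From mathcomp Require Import all_boot all_order all_algebra.
From mathcomp Require Import reals.
From Stdlib Require Import ClassicalEpsilon.
Set Implicit Arguments. Unset Strict Implicit. Unset Printing Implicit Defensive.
Import Order.TTheory GRing.Theory Num.Theory.
Local Open Scope ring_scope.

Section Waterfilling.
Variable R : realType.

Definition is_MP_pinv (m k : nat) (A : 'M[R]_(m, k)) (P : 'M[R]_(k, m)) : Prop :=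
  [/\ A *m P *m A = A, P *m A *m P = P,
      (A *m P)^T = A *m P & (P *m A)^T = P *m A].

(* A^+ : the (unique) Moore-Penrose pseudo-inverse, chosen by Hilbert's epsilon. *)
Definition pinv (m k : nat) (A : 'M[R]_(m, k)) : 'M[R]_(k, m) :=
  epsilon (inhabits 0) (is_MP_pinv A).

Definition is_norm (n : nat) (nrm : 'rV[R]_n -> R) : Prop :=
  [/\ forall v, 0 <= nrm v,
      forall v, nrm v = 0 -> v = 0,
      forall (a : R) v, nrm (a *: v) = `|a| * nrm v
    & forall u v, nrm (u + v) <= nrm u + nrm v].

Definition L1sens (m k : nat) (A : 'M[R]_(m, k)) : R :=
  \big[Num.max/0]_(j < k) \sum_(i < m) `|A i j|.

Definition frob2 (m k : nat) (M : 'M[R]_(m, k)) : R :=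
  \sum_(i < m) \sum_(j < k) M i j ^+ 2.

Definition rows_of (p k : nat) (M : 'M[R]_(p, k)) : seq 'rV[R]_k :=
  [seq row i M | i <- enum 'I_p].

Variables (I : finType) (n : nat) (p : I -> nat).
Variables (A : forall l : I, 'M[R]_(p l, n)) (s : I -> R) (nrm : 'rV[R]_n -> R).

Definition coll_rows (S : {set I}) : seq 'rV[R]_n :=
  flatten [seq [seq v <- rows_of (s l *: A l) | v != 0] | l <- enum S].

Definition dir (v : 'rV[R]_n) : 'rV[R]_n := (nrm v)^-1 *: v.

Definition buckets (S : {set I}) : seq 'rV[R]_n := undup (map dir (coll_rows S)).

Definition bucket_weight (S : {set I}) (e : 'rV[R]_n) : R :=
  \sum_(v <- coll_rows S | dir v == e) nrm v.

Definition joint_rows (S : {set I}) : seq 'rV[R]_n :=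
  [seq bucket_weight S e *: e | e <- buckets S].

Definition joint_strategy (S : {set I}) : 'M[R]_(size (joint_rows S), n) :=
  \matrix_(i < size (joint_rows S), j < n) (nth 0 (joint_rows S) i) 0 j.

Definition budget (eps : R) (S : {set I}) : R := (\sum_(l in S) s l) * eps.

Variables (m : I -> nat) (W : forall l : I, 'M[R]_(m l, n)).

Definition Err (eps : R) (S : {set I}) (i : I) : R :=
  2 * L1sens (joint_strategy S) ^+ 2 / budget eps S ^+ 2
    * frob2 (W i *m pinv (joint_strategy S)).

End Waterfilling.

(* Main.v *)
Require Import Defs.
From HB Require Import structures.
From mathcomp Require Import all_boot all_order all_algebra.
From mathcomp Require Import reals ring.
From Stdlib Require Import ClassicalEpsilon.
Import Order.TTheory GRing.Theory Num.Theory.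
Local Open Scope ring_scope.
Lemma gram_unit (R : realFieldType) r q (M : 'M[R]_(r,q)) :
  row_free M -> M *m M^T \in unitmx.
Proof.
move=> fM; rewrite -row_free_unit -kermx_eq0.
apply/eqP/row_matrixP => i; rewrite row0.
set x := row i (kermx _).
have hx : x *m (M *m M^T) = 0 by rewrite /x -row_mul mulmx_ker row0.
have xM0 : x *m M = 0.
  have h0 : (x *m M) *m (x *m M)^T = 0.
    by rewrite trmx_mul !mulmxA -[x *m M *m M^T]mulmxA hx mul0mx.
  apply/rowP => j; rewrite [in RHS]mxE.
  move/matrixP: h0 => /(_ 0 0); rewrite !mxE => /eqP.
  rewrite psumr_eq0; last by move=> k _; rewrite !mxE -expr2 sqr_ge0.
  move=> /allP /(_ j (mem_index_enum _)) /=; rewrite mxE.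
  rewrite !mxE mulf_eq0 orbb => /eqP -> //.
have := @row_free_inj _ 1 _ _ _ fM x 0; rewrite /= xM0 mul0mx; by apply.
Qed.

Lemma MP_exists (R : realType) m k (A : 'M[R]_(m, k)) :
  exists P, is_MP_pinv A P.
Proof.
have [r [C [F [hA fF fC]]]] : exists r (C : 'M[R]_(m,r)) (F : 'M[R]_(r,k)),
    [/\ A = C *m F, row_free F & row_free C^T].
  exists (\rank A), (col_base A), (row_base A); split.
  - by rewrite mulmx_base.
  - exact: row_base_free.
  - by rewrite /row_free mxrank_tr; have := col_base_full A.
have uH := gram_unit _ _ _ _ fF.
have uG := gram_unit _ _ _ _ fC; rewrite trmxK in uG.
set H := F *m F^T in uH *; set G := C^T *m C in uG *.
have sH : H^T = H by rewrite /H trmx_mul trmxK.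
have sG : G^T = G by rewrite /G trmx_mul trmxK.
exists (F^T *m invmx H *m invmx G *m C^T).
have AP : A *m (F^T *m invmx H *m invmx G *m C^T) = C *m invmx G *m C^T.
  by rewrite hA !mulmxA -(mulmxA C F) -/H -(mulmxA C H) mulmxV // mulmx1.
have PA : (F^T *m invmx H *m invmx G *m C^T) *m A = F^T *m invmx H *m F.
  by rewrite hA !mulmxA -(mulmxA _ C^T C) -/G -(mulmxA _ (invmx G) G) mulVmx // mulmx1.
split.
- by rewrite AP hA !mulmxA -(mulmxA _ C^T C) -/G -(mulmxA _ (invmx G) G) mulVmx // mulmx1.
- by rewrite PA !mulmxA -(mulmxA _ F F^T) -/H -(mulmxA _ (invmx H) H) mulVmx // mulmx1.
- by rewrite AP !trmx_mul trmxK trmx_inv sG mulmxA.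
- by rewrite PA !trmx_mul trmxK trmx_inv sH mulmxA.
Qed.

Lemma pinvP (R : realType) m k (A : 'M[R]_(m, k)) : is_MP_pinv A (pinv A).
Proof. rewrite /pinv; apply: epsilon_spec; exact: MP_exists. Qed.
Lemma frob2_tr (R : realType) p q (M : 'M[R]_(p,q)) : frob2 M = \tr (M *m M^T).
Proof.
rewrite /frob2 /mxtrace; apply: eq_bigr => i _; rewrite mxE.
by apply: eq_bigr => j _; rewrite mxE expr2.
Qed.

Lemma frob2_ge0 (R : realType) p q (M : 'M[R]_(p,q)) : 0 <= frob2 M.
Proof. by apply: sumr_ge0 => i _; apply: sumr_ge0 => j _; apply: sqr_ge0. Qed.

Lemma frob2_proj (R : realType) p q (Z : 'M[R]_(p,q)) (Q : 'M[R]_q) :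
  Q^T = Q -> Q *m Q = Q -> frob2 (Z *m Q) <= frob2 Z.
Proof.
move=> sQ iQ.
have -> : frob2 Z = frob2 (Z *m Q) + frob2 (Z - Z *m Q).
  rewrite !frob2_tr -mxtraceD; congr (\tr _).
  rewrite !trmx_mul sQ linearB /= trmx_mul sQ mulmxBl !mulmxBr.
  have e1 : Z *m Q *m (Q *m Z^T) = Z *m Q *m Z^T by rewrite mulmxA -(mulmxA Z) iQ.
  by rewrite e1 mulmxA subrr subr0 addrC subrK.
by rewrite lerDl frob2_ge0.
Qed.

Lemma sq_sum_single (R : realType) (J : finType) (x : J -> R) :
  (forall a a', a != a' -> x a * x a' = 0) -> (\sum_a x a) ^+ 2 = \sum_a x a ^+ 2.
Proof.
move=> h; rewrite expr2 big_distrl /=; apply: eq_bigr => a _.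
rewrite big_distrr /= (bigD1 a) //= big1 ?addr0 ?expr2 // => b ba.
by rewrite h // eq_sym.
Qed.

Lemma frob2_D (R : realType) p k k' (Y : 'M[R]_(p,k)) (D : 'M[R]_(k,k')) :
  (forall a a' b, a != a' -> D a b * D a' b = 0) ->
  (forall a, \sum_b D a b ^+ 2 <= 1) -> frob2 (Y *m D) <= frob2 Y.
Proof.
move=> h1 h2; rewrite /frob2; apply: ler_sum => r _.
have e : forall b, (Y *m D) r b ^+ 2 = \sum_a (Y r a * D a b) ^+ 2.
  move=> b; rewrite mxE sq_sum_single // => a a' aa'.
  by rewrite mulrACA h1 // mulr0.
under eq_bigr => b _ do rewrite e.
rewrite exchange_big /=; apply: ler_sum => a _.
under eq_bigr => b _ do rewrite exprMn.
rewrite -big_distrr /= -[leRHS]mulr1; apply: ler_wpM2l => //; exact: sqr_ge0.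
Qed.

Lemma key_ineq (R : realType) q k k' n (Wm : 'M[R]_(q,n)) (Ak : 'M[R]_(k,n))
  (Ak' : 'M[R]_(k',n)) (D : 'M[R]_(k,k')) :
  Ak = D *m Ak' ->
  (forall a a' b, a != a' -> D a b * D a' b = 0) ->
  (forall a, \sum_b D a b ^+ 2 <= 1) ->
  (Wm <= Ak)%MS -> frob2 (Wm *m pinv Ak') <= frob2 (Wm *m pinv Ak).
Proof.
move=> hD h1 h2 /submxP [Z hZ].
have [e1 _ _ _] := pinvP _ _ _ Ak.
have [f1 f2 f3 _] := pinvP _ _ _ Ak'.
have hW : Wm = Wm *m pinv Ak *m D *m Ak'.
  by rewrite -mulmxA -hD hZ -!mulmxA (mulmxA Ak) e1.
rewrite {1}hW -mulmxA.
apply: (@le_trans _ _ (frob2 (Wm *m pinv Ak *m D))); last exact: frob2_D.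
apply: frob2_proj => //.
by rewrite -mulmxA [pinv Ak' *m _]mulmxA f2.
Qed.
Set Implicit Arguments. Unset Strict Implicit.
Lemma sum_if_eq (R : realType) (U : eqType) (r : seq U) (x : U) (G : U -> R) :
  uniq r -> x \in r -> \sum_(y <- r) (if y == x then G y else 0) = G x.
Proof.
move=> ur xr; rewrite (big_rem x) //= eqxx big1_seq ?addr0 // => y /= yr.
case: eqP => // yx; move: ur; rewrite (perm_uniq (perm_to_rem xr)) /= => /andP [].
by rewrite yx in yr; rewrite yr.
Qed.

Lemma sum_ord_nth (R : realType) (T : Type) (x0 : T) (B : seq T) (k : nat) (G : T -> R) :
  k = size B -> \sum_(a < k) G (nth x0 B a) = \sum_(e <- B) G e.
Proof. by move=> ->; rewrite (big_nth x0) big_mkord. Qed.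

Lemma sum_partition (R : realType) (T U : eqType) (f : T -> U) (r : seq T) (F : T -> R) :
  \sum_(e <- undup (map f r)) \sum_(v <- r | f v == e) F v = \sum_(v <- r) F v.
Proof.
under eq_bigr do rewrite big_mkcond /=.
rewrite exchange_big /= big_seq [RHS]big_seq; apply: eq_bigr => v vr.
under eq_bigr do rewrite eq_sym.
by rewrite (@sum_if_eq _ _ _ _ (fun _ => F v)) ?undup_uniq // mem_undup map_f.
Qed.

Lemma bigmax_const (R : realType) (k : nat) (x : R) : 0 <= x ->
  \big[Num.max/0]_(c < k) x = if (0 < k)%N then x else 0.
Proof.
move=> x0; rewrite big_const_ord; case: k => [|k] //=.
elim: k => [|k IH] /=; first by rewrite max_l.
by rewrite IH maxxx.
Qed.

Lemma coll_sum (R : realType) (I : finType) (n : nat) (p : I -> nat)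
  (A : forall l : I, 'M[R]_(p l, n)) (s : I -> R) (S : {set I})
  (P : pred 'rV[R]_n) (F : 'rV[R]_n -> R) :
  \sum_(v <- coll_rows A s S | P v) F v =
  \sum_(l in S) \sum_(v <- [seq v <- rows_of (s l *: A l) | v != 0] | P v) F v.
Proof. by rewrite /coll_rows big_flatten /= big_map big_enum. Qed.

Lemma coll_memP (R : realType) (I : finType) (n : nat) (p : I -> nat)
  (A : forall l : I, 'M[R]_(p l, n)) (s : I -> R) (S : {set I}) v :
  reflect (exists2 l, l \in S & v \in [seq v <- rows_of (s l *: A l) | v != 0])
    (v \in coll_rows A s S).
Proof.
apply: (iffP flattenP) => [[r /mapP [l lS ->] vr]|[l lS vr]].
  by exists l => //; rewrite mem_enum in lS.
by exists [seq v <- rows_of (s l *: A l) | v != 0] => //; apply: map_f; rewrite mem_enum.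
Qed.

Lemma coll_nz (R : realType) (I : finType) (n : nat) (p : I -> nat)
  (A : forall l : I, 'M[R]_(p l, n)) (s : I -> R) (S : {set I}) v :
  v \in coll_rows A s S -> v != 0.
Proof. by case/coll_memP => l _; rewrite mem_filter => /andP []. Qed.

Lemma norm_pos (R : realType) (n : nat) (nrm : 'rV[R]_n -> R) v :
  is_norm nrm -> v != 0 -> 0 < nrm v.
Proof.
case=> h0 h1 _ _ vnz; rewrite lt_def h0 andbT.
by apply/eqP => /h1 /eqP; rewrite (negbTE vnz).
Qed.

Lemma dirK (R : realType) (n : nat) (nrm : 'rV[R]_n -> R) v :
  is_norm nrm -> v != 0 -> nrm v *: dir nrm v = v.
Proof.
move=> hn vnz; rewrite /dir scalerA mulfV ?scale1r //.
exact/negbT/gt_eqF/norm_pos.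
Qed.

Lemma bw_ge0 (R : realType) (I : finType) (n : nat) (p : I -> nat)
  (A : forall l : I, 'M[R]_(p l, n)) (s : I -> R) (nrm : 'rV[R]_n -> R) (S : {set I}) (e : 'rV[R]_n) :
  is_norm nrm -> 0 <= bucket_weight A s nrm S e.
Proof. by case=> h0 _ _ _; apply: sumr_ge0 => v _; apply: h0. Qed.

Lemma bw_pos (R : realType) (I : finType) (n : nat) (p : I -> nat)
  (A : forall l : I, 'M[R]_(p l, n)) (s : I -> R) (nrm : 'rV[R]_n -> R) (S : {set I}) (e : 'rV[R]_n) :
  is_norm nrm -> e \in buckets A s nrm S -> 0 < bucket_weight A s nrm S e.
Proof.
move=> hn; rewrite mem_undup => /mapP [v vc ->].
rewrite /bucket_weight (big_rem v) //= eqxx.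
apply: (lt_le_trans (norm_pos hn (coll_nz vc))); rewrite lerDl.
by case: hn => h0 _ _ _; apply: sumr_ge0 => w _; apply: h0.
Qed.

Lemma bw_U (R : realType) (I : finType) (n : nat) (p : I -> nat)
  (A : forall l : I, 'M[R]_(p l, n)) (s : I -> R) (nrm : 'rV[R]_n -> R) (S : {set I}) (j : I) (e : 'rV[R]_n) :
  j \notin S -> bucket_weight A s nrm (j |: S) e =
  \sum_(v <- [seq v <- rows_of (s j *: A j) | v != 0] | dir nrm v == e) nrm v
   + bucket_weight A s nrm S e.
Proof. by move=> jS; rewrite /bucket_weight !coll_sum big_setU1. Qed.

Lemma buckets_sub (R : realType) (I : finType) (n : nat) (p : I -> nat)
  (A : forall l : I, 'M[R]_(p l, n)) (s : I -> R) (nrm : 'rV[R]_n -> R) (S T : {set I}) (e : 'rV[R]_n) :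
  S \subset T -> e \in buckets A s nrm S -> e \in buckets A s nrm T.
Proof.
move=> sST; rewrite !mem_undup => /mapP [v vc ->]; apply: map_f.
have [l lS vl] := coll_memP _ _ _ _ vc.
by apply/coll_memP; exists l => //; apply: (subsetP sST).
Qed.

Lemma size_jr (R : realType) (I : finType) (n : nat) (p : I -> nat)
  (A : forall l : I, 'M[R]_(p l, n)) (s : I -> R) (nrm : 'rV[R]_n -> R) (S : {set I}) :
  size (joint_rows A s nrm S) = size (buckets A s nrm S).
Proof. exact: size_map. Qed.

Lemma J_entry (R : realType) (I : finType) (n : nat) (p : I -> nat)
  (A : forall l : I, 'M[R]_(p l, n)) (s : I -> R) (nrm : 'rV[R]_n -> R) (S : {set I})
  (a : 'I_(size (joint_rows A s nrm S))) c :
  joint_strategy A s nrm S a c =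
  bucket_weight A s nrm S (nth 0 (buckets A s nrm S) a) *
    (nth 0 (buckets A s nrm S) a) 0 c.
Proof.
rewrite mxE /joint_rows (nth_map 0 0); first by rewrite mxE.
by rewrite -(size_jr A s nrm S) ltn_ord.
Qed.

Lemma L1_eq (R : realType) (I : finType) (n : nat) (p : I -> nat)
  (A : forall l : I, 'M[R]_(p l, n)) (s : I -> R) (nrm : 'rV[R]_n -> R) (S : {set I}) :
  is_norm nrm -> (forall l, 0 < s l) ->
  (forall l (j : 'I_n), \sum_(i < p l) `|A l i j| = 1) ->
  L1sens (joint_strategy A s nrm S) = if (0 < n)%N then \sum_(l in S) s l else 0.
Proof.
move=> hn hs hcol; rewrite /L1sens.
transitivity (\big[Num.max/0]_(c < n) \sum_(l in S) s l); last first.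
  by apply: bigmax_const; apply: sumr_ge0 => l _; apply: ltW.
apply: eq_bigr => c _.
under eq_bigr do rewrite J_entry.
rewrite (sum_ord_nth 0 (fun e => `|bucket_weight A s nrm S e * e 0 c|)); last exact: size_jr.
transitivity (\sum_(e <- buckets A s nrm S)
   \sum_(v <- coll_rows A s S | dir nrm v == e) `|v 0 c|).
  apply: eq_bigr => e _.
  rewrite normrM (ger0_norm (bw_ge0 _ _ _ _ hn)) /bucket_weight big_distrl /=.
  rewrite big_seq_cond [RHS]big_seq_cond; apply: eq_bigr => v /andP [vc /eqP <-].
  have hv := dirK hn (coll_nz vc).
  rewrite -[in RHS]hv [in RHS]mxE normrM ger0_norm //; exact: ltW (norm_pos hn (coll_nz vc)).
rewrite /buckets sum_partition coll_sum; apply: eq_bigr => l _.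
rewrite big_filter big_mkcond /=.
transitivity (\sum_(v <- rows_of (s l *: A l)) `|v 0 c|).
  by apply: eq_bigr => v _; case: eqP => // ->; rewrite mxE normr0.
rewrite /rows_of big_map big_enum /=.
transitivity (s l * \sum_(i < p l) `|A l i c|); last by rewrite hcol mulr1.
rewrite big_distrr /=; apply: eq_big => // i; rewrite !mxE normrM ger0_norm //.
exact: ltW.
Qed.

Lemma Err_eq (R : realType) (I : finType) (n : nat) (m p : I -> nat)
  (W : forall l : I, 'M[R]_(m l, n))
  (A : forall l : I, 'M[R]_(p l, n)) (s : I -> R) (nrm : 'rV[R]_n -> R) (eps : R)
  (S : {set I}) (i : I) :
  is_norm nrm -> 0 < eps -> (forall l, 0 < s l) ->
  (forall l (j : 'I_n), \sum_(i < p l) `|A l i j| = 1) -> S != set0 ->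
  Err A s nrm W eps S i =
  (if (0 < n)%N then 2 / eps ^+ 2 else 0) * frob2 (W i *m pinv (joint_strategy A s nrm S)).
Proof.
move=> hn he hs hcol /set0Pn [l lS].
have X0 : 0 < \sum_(l in S) s l.
  rewrite (bigD1 l) //=; apply: (lt_le_trans (hs l)); rewrite lerDl.
  by apply: sumr_ge0 => k _; apply: ltW.
rewrite /Err L1_eq // /budget; case: ifP => _; last by rewrite expr2 !(mulr0, mul0r).
congr (_ * _); field; apply/andP; split; exact/negbT/gt_eqF.
Qed.

Lemma A_le_J (R : realType) (I : finType) (n : nat) (p : I -> nat)
  (A : forall l : I, 'M[R]_(p l, n)) (s : I -> R) (nrm : 'rV[R]_n -> R) (S : {set I}) (i : I) :
  is_norm nrm -> (forall l, 0 < s l) -> i \in S ->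
  (A i <= joint_strategy A s nrm S)%MS.
Proof.
move=> hn hs iS; apply/row_subP => r.
have [->|nz] := eqVneq (row r (A i)) 0; first exact: sub0mx.
set v := row r (s i *: A i).
have hv : v = s i *: row r (A i) by apply/rowP => c; rewrite !mxE.
have vnz : v != 0 by rewrite hv scalemx_eq0 negb_or nz andbT gt_eqF.
have vc : v \in coll_rows A s S.
  apply/coll_memP; exists i => //; rewrite mem_filter vnz /=.
  by apply: map_f; rewrite mem_enum.
set e := dir nrm v.
have eB : e \in buckets A s nrm S by rewrite mem_undup map_f.
have ai : (index e (buckets A s nrm S) < size (joint_rows A s nrm S))%N.
  by rewrite size_jr index_mem.
have hrow : row (Ordinal ai) (joint_strategy A s nrm S) = bucket_weight A s nrm S e *: e.
  by apply/rowP => c; rewrite mxE J_entry /= nth_index // [RHS]mxE.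
have fe : bucket_weight A s nrm S e != 0 by apply/negbT/gt_eqF/bw_pos.
have -> : row r (A i) = ((s i)^-1 * nrm v / bucket_weight A s nrm S e) *:
    row (Ordinal ai) (joint_strategy A s nrm S).
  rewrite hrow scalerA divfK // -scalerA dirK // hv scalerA mulVf ?scale1r //.
  exact/negbT/gt_eqF.
by apply: scalemx_sub; apply: row_sub.
Qed.
Theorem mainTheorem1 (R : realType) (I : finType) (n : nat)
    (m p : I -> nat) (W : forall l : I, 'M[R]_(m l, n))
    (A : forall l : I, 'M[R]_(p l, n)) (s : I -> R)
    (nrm : 'rV[R]_n -> R) (eps : R) :
  is_norm nrm ->
  0 < eps ->
  (forall l, 0 < s l) ->
  (forall l, W l = W l *m pinv (A l) *m A l) ->
  (forall l (j : 'I_n), \sum_(i < p l) `|A l i j| = 1) ->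
  forall (S : {set I}) (j : I), S != set0 -> j \notin S ->
  forall i, i \in S ->
    Err A s nrm W eps (j |: S) i <= Err A s nrm W eps S i.
Proof.
move=> hn heps hs hW hcol S j S0 jS i iS.
have S'0 : j |: S != set0 by apply/set0Pn; exists j; rewrite setU11.
rewrite !Err_eq //; apply: ler_wpM2l.
  by case: ifP => _ //; apply: divr_ge0 => //; apply: exprn_ge0; apply: ltW.
set B := buckets A s nrm S; set B' := buckets A s nrm (j |: S).
set f := bucket_weight A s nrm S; set f' := bucket_weight A s nrm (j |: S).
have uB : uniq B by apply: undup_uniq.
have uB' : uniq B' by apply: undup_uniq.
have BB' : forall e, e \in B -> e \in B'.
  by move=> e; apply: buckets_sub; apply: subsetUr.
have f'pos : forall e, e \in B -> 0 < f' e by move=> e /BB' eB; apply: bw_pos.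
have ff' : forall e, f e <= f' e.
  move=> e; rewrite /f' bw_U // lerDr; case: hn => h0 _ _ _.
  by apply: sumr_ge0 => v _; apply: h0.
have fpos : forall e, e \in B -> 0 < f e by move=> e eB; apply: bw_pos.
have aB : forall a : 'I_(size (joint_rows A s nrm S)), nth 0 B a \in B.
  by move=> a; apply: mem_nth; rewrite -(size_jr A s nrm S) ltn_ord.
pose D := \matrix_(a < size (joint_rows A s nrm S), b < size (joint_rows A s nrm (j |: S)))
   (if nth 0 B' b == nth 0 B a then f (nth 0 B a) / f' (nth 0 B a) else 0).
apply: (@key_ineq _ _ _ _ _ _ _ _ D).
- apply/matrixP => a c; rewrite J_entry [RHS]mxE.
  set e := nth 0 B a.
  pose G := fun x : 'rV[R]_n => if x == e then f e / f' e * (f' x * x 0 c) else 0.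
  transitivity (\sum_(b < size (joint_rows A s nrm (j |: S))) G (nth 0 B' b)).
    rewrite (sum_ord_nth 0 G) ?size_jr // /G (sum_if_eq (fun x => f e / f' e * (f' x * x 0 c))) // ?BB' //; last exact: aB.
    by rewrite -/f mulrA divfK //; apply/negbT/gt_eqF/f'pos/aB.
  apply: eq_bigr => b _ /=; rewrite mxE J_entry -/B' -/f' /G.
  by case: ifP => _; rewrite ?mul0r.
- move=> a a' b aa'; rewrite !mxE.
  case: eqP => [h|_]; last by rewrite mul0r.
  case: eqP => [h'|_]; last by rewrite mulr0.
  suff haa : a = a' by rewrite haa eqxx in aa'.
  apply/val_inj => /=; apply/eqP.
  have sa : (a < size B)%N by rewrite -(size_jr A s nrm S) ltn_ord.
  have sa' : (a' < size B)%N by rewrite -(size_jr A s nrm S) ltn_ord.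
  by rewrite -(nth_uniq 0 sa sa' uB) -h -h'.
- move=> a; set e := nth 0 B a; have eB : e \in B := aB a.
  pose G := fun x : 'rV[R]_n => if x == e then (f e / f' e) ^+ 2 else 0.
  have -> : \sum_b D a b ^+ 2 = \sum_(b < size (joint_rows A s nrm (j |: S))) G (nth 0 B' b).
    by apply: eq_bigr => b _ /=; rewrite mxE /G; case: ifP => _ //; rewrite expr2 mul0r.
  rewrite (sum_ord_nth 0 G) ?size_jr // /G (sum_if_eq (fun=> (f e / f' e) ^+ 2)) ?BB' //.
  have fe := fpos e eB; have f'e := f'pos e eB.
  apply: exprn_ile1; first by apply: divr_ge0; apply: ltW.
  by rewrite ler_pdivrMr ?mul1r.
- apply: (submx_trans (B := A i)); first by rewrite hW submxMl.
  exact: A_le_J.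
Qed.
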